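(* Let $p\ge 0$ and $n\ge 1$. A permutation $\sigma$ of $[n]$ belongs to the basis $\mathcal{B}_p$ if and only if all of the following hold: (i) $\sigma$ has exactly $p+1$ non-left-to-right-maxima; (ii) the value $n-1$ is a non-left-to-right-maximum of $\sigma$; (iii) $\sigma_2$ is a non-left-to-right-maximum of $\sigma$; (iv) for any three left-to-right maxima $\sigma_i,\sigma_j,\sigma_k$ with $i<j<k$ such that no other left-to-right maximum lies at a position strictly between $i$ and $k$, there exists a non-left-to-right-maximum $\sigma_t$ with $j<t<k$ and $\sigma_t>\sigma_i$.
   Context: Permutations of $[n]$ are written as words $\sigma=\sigma_1\cdots\sigma_n$. A right-jump transforms $\sigma$ into $\sigma_1\cdots\sigma_{i-1}\sigma_{i+1}\cdots\sigma_j\sigma_i\sigma_{j+1}\cdots\sigma_n$ for some $1\le i<j\le n$. A left-to-right maximum of $\sigma$ is an entry $\sigma_i$ such that $\sigma_k<\sigma_i$ for all $k<i$; every other entry is a non-left-to-right-maximum. A permutation $\pi$ of $[k]$ is a pattern of $\sigma$ (written $\pi\prec\sigma$) if some subsequence $\sigma_{i_1}\cdots\sigma_{i_k}$ ($i_1<\dots<i_k$) is order-isomorphic to $\pi$. $\mathcal{C}_p$ is the set of all permutations (of any length $n$) obtainable from the identity $12\cdots n$ by at most $p$ right-jumps; it is closed under taking patterns. The basis $\mathcal{B}_p$ is the set of permutations $\sigma\notin\mathcal{C}_p$ such that every pattern $\pi\prec\sigma$ with $\pi\ne\sigma$ lies in $\mathcal{C}_p$; then $\mathcal{C}_p$ is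 exactly the set of permutations avoiding every element of $\mathcal{B}_p$. *)

(* Defs.v *)
(* Permutations of [n] are words: seq nat that are
   permutations of [:: 1; ...; n].  Positions are 0-indexed internally. *)
From mathcomp Require Import all_boot.
Set Implicit Arguments. Unset Strict Implicit. Unset Printing Implicit Defensive.

Definition is_perm (s : seq nat) : bool := perm_eq s (iota 1 (size s)).

(* right-jump with 0-indexed positions i < j (paper's i+1 < j+1):
   s_0..s_{i-1} s_{i+1}..s_j s_i s_{j+1}..s_{n-1} *)
Definition rjump (s : seq nat) (i j : nat) : seq nat :=
  take i s ++ take (j - i) (drop i.+1 s) ++ [:: nth 0 s i] ++ drop j.+1 s.

Fixpoint jumps (k : nat) (s t : seq nat) : Prop :=
  match k with
  | 0 => s = t
  | k'.+1 => exists i j, i < j /\ j < size s /\ jumps k' (rjump s i j) t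
  end.

Definition inC (p : nat) (s : seq nat) : Prop :=
  exists k, k <= p /\ jumps k (iota 1 (size s)) s.

Definition order_iso (u v : seq nat) : Prop :=
  size u = size v /\
  forall a b, a < size u -> b < size u ->
    (nth 0 u a < nth 0 u b) = (nth 0 v a < nth 0 v b).

Definition pattern (pi s : seq nat) : Prop :=
  is_perm pi /\ exists m : bitseq, order_iso (mask m s) pi.

Definition inB (p : nat) (s : seq nat) : Prop :=
  is_perm s /\ ~ inC p s /\
  forall pi, pattern pi s -> pi <> s -> inC p pi.

Definition ltrmax (s : seq nat) (i : nat) : bool :=
  all (fun k => nth 0 s k < nth 0 s i) (iota 0 i).

Definition nonltr (s : seq nat) (i : nat) : bool :=
  (i < size s) && ~~ ltrmax s i.

(* Main.v *)
Require Import Defs.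
From mathcomp Require Import all_boot zify.
Set Implicit Arguments. Unset Strict Implicit. Unset Printing Implicit Defensive.


Fixpoint nl (acc : nat) (s : seq nat) : nat :=
  if s is x :: s' then (if acc < x then nl x s' else (nl acc s').+1) else 0.

Definition mx (acc : nat) (s : seq nat) := foldl maxn acc s.

Lemma nl_mono s a b : a <= b -> nl a s <= nl b s.
Proof.
elim: s a b => [|x s IH] a b ab //=.
case: ifP => ax; case: ifP => bx.
- exact: IH.
- apply: leqW; apply: IH; lia.
- lia.
- exact: IH.
Qed.

Lemma nl_cat acc a b : nl acc (a ++ b) = nl acc a + nl (mx acc a) b.
Proof.
elim: a acc => [|x a IH] acc //=.
case: ifP => ax; rewrite IH.
- by rewrite /mx /= (_ : maxn acc x = x) //; lia.
- by rewrite /mx /= (_ : maxn acc x = acc) //; lia.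
Qed.

Lemma mx_maxn acc x b : mx (maxn acc x) b = maxn (mx acc b) x.
Proof.
elim: b acc => [|y b IH] acc //=.
rewrite /mx /= -/(mx _ b).
rewrite (_ : maxn (maxn acc x) y = maxn (maxn acc y) x); last by lia.
by rewrite IH.
Qed.

Lemma nl_cons_ge acc x s : nl (maxn acc x) s <= nl acc (x :: s).
Proof.
rewrite /=; case: ifP => ax.
- by rewrite (_ : maxn acc x = x) //; lia.
- by rewrite (_ : maxn acc x = acc) //; lia.
Qed.

Lemma nl_move acc b x c : nl acc (b ++ x :: c) <= (nl acc (x :: b ++ c)).+1.
Proof.
rewrite nl_cat.
have h1 : nl (mx acc b) (x :: c) <= (nl (maxn (mx acc b) x) c).+1.
  rewrite /=; case: ifP => ax.
  - by rewrite (_ : maxn (mx acc b) x = x) //; lia.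
  - by rewrite (_ : maxn (mx acc b) x = mx acc b) //; lia.
have h2 := nl_cons_ge acc x (b ++ c).
rewrite nl_cat mx_maxn in h2.
have h3 : nl acc b <= nl (maxn acc x) b by apply: nl_mono; lia.
lia.
Qed.

Lemma rjump_eq a x b c :
  rjump (a ++ x :: b ++ c) (size a) (size a + size b) = a ++ b ++ x :: c.
Proof.
rewrite /rjump.
rewrite (take_size_cat _ (erefl (size a))).
rewrite (_ : size a + size b - size a = size b); last by lia.
have e1 : drop (size a).+1 (a ++ x :: b ++ c) = b ++ c.
  by rewrite drop_cat ltnNge leqnSn /= subSnn /= drop0.
have e2 : nth 0 (a ++ x :: b ++ c) (size a) = x by rewrite nth_cat ltnn subnn.
have e3 : drop (size a + size b).+1 (a ++ x :: b ++ c) = c.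
  rewrite drop_cat ltnNge (_ : size a <= (size a + size b).+1) /=; last by lia.
  rewrite (_ : (size a + size b).+1 - size a = (size b).+1); last by lia.
  by rewrite /= drop_size_cat.
by rewrite e1 e2 e3 take_size_cat.
Qed.

Lemma rjump_split s i j : i < j -> j < size s ->
  s = take i s ++ nth 0 s i :: take (j - i) (drop i.+1 s) ++ drop j.+1 s /\
  rjump s i j = take i s ++ take (j - i) (drop i.+1 s) ++ nth 0 s i :: drop j.+1 s.
Proof.
move=> ij js; split; last by [].
rewrite -{1}(cat_take_drop i s); congr (_ ++ _).
rewrite (drop_nth 0); last by lia.
congr (_ :: _).
rewrite -{1}(cat_take_drop (j - i) (drop i.+1 s)) drop_drop.
by rewrite (_ : j - i + i.+1 = j.+1); last by lia.
Qed.

Lemma size_rjump s i j : i < j -> j < size s -> size (rjump s i j) = size s.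
Proof.
move=> ij js; have [e1 e2] := rjump_split ij js.
rewrite e2 [in RHS]e1 !size_cat /= ?size_cat; lia.
Qed.

Lemma nl_rjump acc s i j : i < j -> j < size s -> nl acc (rjump s i j) <= (nl acc s).+1.
Proof.
move=> ij js; have [e1 e2] := rjump_split ij js.
rewrite e2 [in X in _ <= X]e1.
move: (take i s) (take (j - i) (drop i.+1 s)) (nth 0 s i) (drop j.+1 s) => a b x c.
rewrite (nl_cat acc a (b ++ _)) (nl_cat acc a (x :: _)).
have := nl_move (mx acc a) b x c; lia.
Qed.

Lemma jumps_size k s t : jumps k s t -> size t = size s.
Proof.
elim: k s => [|k IH] s /=; first by move->.
move=> [i [j [ij [js h]]]]; rewrite (IH _ h); exact: size_rjump.
Qed.

Lemma jumps_nl k s t : jumps k s t -> nl 0 t <= nl 0 s + k.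
Proof.
elim: k s => [|k IH] s /=; first by move->; lia.
move=> [i [j [ij [js h]]]]; have := IH _ h; have := nl_rjump 0 ij js; lia.
Qed.

Lemma jumps_snoc k s t i j : jumps k s t -> i < j -> j < size t ->
  jumps k.+1 s (rjump t i j).
Proof.
elim: k s => [|k IH] s /=.
  by move=> -> ij jt; exists i, j.
move=> [i' [j' [ij' [js' h]]]] ij jt.
exists i', j'; split => //; split => //; exact: IH.
Qed.

Lemma nl_iota acc m n : acc < m -> nl acc (iota m n) = 0.
Proof.
elim: n acc m => [|n IH] acc m //= am.
by rewrite am IH.
Qed.

Lemma C1 k n t : jumps k (iota 1 n) t -> nl 0 t <= k.
Proof. move/jumps_nl; rewrite nl_iota //. Qed.

Lemma nl0_path acc t : nl acc t = 0 -> path ltn acc t.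
Proof.
elim: t acc => [|x t IH] acc //=.
case: ifP => // ax h; apply/andP; split => //; exact: IH.
Qed.

Lemma nl_pos_split acc t : 0 < nl acc t ->
  exists u x c, t = u ++ x :: c /\ x <= mx acc u.
Proof.
elim: t acc => [|y t IH] acc //=.
case: ifP => ay.
- move/IH => [u [x [c [-> h]]]].
  exists (y :: u), x, c; split => //.
  by rewrite /mx /= (_ : maxn acc y = y) //; lia.
- move=> _; exists [::], y, t; split => //; rewrite /mx /=; lia.
Qed.

Lemma mx_in acc u : mx acc u = acc \/ mx acc u \in u.
Proof.
elim: u acc => [|y u IH] acc /=; first by left.
rewrite /mx /= -/(mx _ u).
case: (IH (maxn acc y)) => e.
- rewrite e; case: (leqP acc y) => h.
  + by right; rewrite mem_head.
  + by left.
- by right; rewrite in_cons e orbT.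
Qed.

Lemma mx_ge acc u : acc <= mx acc u.
Proof.
elim: u acc => [|y u IH] acc //=.
rewrite /mx /= -/(mx _ u); apply: leq_trans (IH _); lia.
Qed.

Lemma mx_lt acc x u : acc < x -> all (fun z => z < x) u -> mx acc u < x.
Proof.
elim: u acc => [|y u IH] acc //= ax /andP [yx h].
rewrite /mx /= -/(mx _ u); apply: IH => //; lia.
Qed.

Lemma split_has (P : pred nat) u : has P u ->
  exists a y b, u = a ++ y :: b /\ P y /\ all (predC P) a.
Proof.
elim: u => [|z u IH] //= /orP [h|h].
  by exists [::], z, u.
case: (boolP (P z)) => pz.
  by exists [::], z, u.
have [a [y [b [-> [py ha]]]]] := IH h.
by exists (z :: a), y, b; rewrite /= pz ha.
Qed.

Lemma perm_pos t : is_perm t -> all (fun x => 0 < x) t.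
Proof.
move=> pt; apply/allP => x; rewrite (perm_mem pt) mem_iota; lia.
Qed.

Lemma C2aux m t : is_perm t -> nl 0 t = m -> jumps m (iota 1 (size t)) t.
Proof.
elim: m t => [|m IH] t pt h.
  have hs : sorted ltn t by case: t pt h => // x t' _ h; move: (nl0_path h) => /= /andP [].
  rewrite /jumps.
  apply/esym/(irr_sorted_eq ltn_trans ltnn hs (iota_ltn_sorted 1 (size t))).
  by move=> z; rewrite (perm_mem pt).
have h0 : 0 < nl 0 t by rewrite h.
have [u [x [c [et hx]]]] := nl_pos_split h0.
have ut : uniq t by rewrite (perm_uniq pt) iota_uniq.
have tpos := perm_pos pt.
have xu : x \notin u by move: ut; rewrite et cat_uniq /= => /and3P [_ /norP [h1 _] _].
have x0 : 0 < x by move/allP: tpos; apply; rewrite et mem_cat mem_head orbT.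
have hu : has (fun z => x <= z) u.
  case: (mx_in 0 u) => e; first by move: hx; rewrite e; lia.
  by apply/hasP; exists (mx 0 u).
have [a [y [b [eu [xy ha]]]]] := split_has hu.
have yx : x < y.
  rewrite ltn_neqAle xy andbT; apply/eqP => e; move: xu; rewrite eu e mem_cat mem_head orbT //.
have ha' : all (fun z => z < x) a by apply: sub_all ha => z /=; lia.
have Mx : mx 0 a < x by apply: mx_lt.
set t' := a ++ x :: (y :: b) ++ c.
have et' : t = rjump t' (size a) (size a + size (y :: b)).
  by rewrite rjump_eq et eu -catA.
have pe : perm_eq t' t.
  rewrite et eu -catA; apply: perm_cat => //.
  by rewrite -cat1s perm_catCA.
have st : size t' = size t by apply: perm_size.
have pt' : is_perm t'.
  by rewrite /is_perm st; apply: perm_trans pt.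
have ht' : nl 0 t' = m.
  move: h; rewrite et eu -catA !nl_cat /= (_ : mx 0 a < x) //.
  rewrite (_ : mx 0 a < y); last by lia.
  rewrite (_ : x < y) //.
  have : x < mx y b by apply: leq_trans yx (mx_ge _ _).
  rewrite nl_cat (_ : maxn (mx 0 a) y = y); last by lia.
  move=> lt; rewrite ltnNge ltnW //=; lia.
have := IH _ pt' ht'.
move=> J; rewrite [in X in jumps _ _ X]et' -st; apply: jumps_snoc => //.
- by rewrite /=; lia.
- by rewrite /t' !size_cat /= ?size_cat; lia.
Qed.

Lemma C2 p t : is_perm t -> nl 0 t <= p -> inC p t.
Proof. by move=> pt h; exists (nl 0 t); split => //; apply: C2aux. Qed.


Lemma allIotaP (P : pred nat) l : reflect (forall k, k < l -> P k) (all P (iota 0 l)).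
Proof.
apply: (iffP allP) => h k.
- by move=> kl; apply: h; rewrite mem_iota.
- by rewrite mem_iota => /andP [_ kl]; apply: h.
Qed.

Lemma ltrP s i : reflect (forall k, k < i -> nth 0 s k < nth 0 s i) (ltrmax s i).
Proof. exact: allIotaP. Qed.

Definition ltrA acc s i := (acc < nth 0 s i) && ltrmax s i.

Lemma iotaS0 n : iota 0 n.+1 = 0 :: map succn (iota 0 n).
Proof. by rewrite /= -(iotaDl 1) ?map_id. Qed.

Lemma bridgeA acc s : count (fun i => ~~ ltrA acc s i) (iota 0 (size s)) = nl acc s.
Proof.
elim: s acc => [|x s IH] acc //=.
rewrite (_ : iota 1 (size s) = map (addn 1) (iota 0 (size s))); last by rewrite -iotaDl.
rewrite count_map.
have e : forall i, ltrA acc (x :: s) (1 + i) = ltrA (maxn acc x) s i.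
  move=> i; rewrite /ltrA add1n /ltrmax iotaS0 /= all_map.
  rewrite (_ : maxn acc x < nth 0 s i = (acc < nth 0 s i) && (x < nth 0 s i)); last by lia.
  by rewrite -!andbA.
rewrite (eq_count (a2 := fun i => ~~ ltrA (maxn acc x) s i)); last by move=> i /=; rewrite e.
rewrite IH /ltrA /ltrmax /=.
case: ifP => ax.
- by rewrite (_ : maxn acc x = x) //; lia.
- by rewrite (_ : maxn acc x = acc) //; lia.
Qed.

Definition N s := count (nonltr s) (iota 0 (size s)).

Lemma bridge s : all (fun x => 0 < x) s -> N s = nl 0 s.
Proof.
move=> hp; rewrite /N -bridgeA; apply: eq_in_count => i; rewrite mem_iota /= => his.
rewrite /nonltr /ltrA his /=.
by move/allP: hp => ->; last by rewrite mem_nth.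
Qed.

Lemma ltr_iso u v i : order_iso u v -> i < size u -> ltrmax u i = ltrmax v i.
Proof.
move=> [su h] iu; rewrite /ltrmax; apply: eq_in_all => k; rewrite mem_iota => /andP [_ ki].
apply: h => //; lia.
Qed.

Lemma N_iso u v : order_iso u v -> N u = N v.
Proof.
move=> hi; have su := hi.1; rewrite /N -su; apply: eq_in_count => i.
rewrite mem_iota /nonltr => /andP [_ iu] /=; rewrite -su iu (ltr_iso hi) //.
Qed.

Lemma count_le_iota y n : y <= n -> count (fun x => x <= y) (iota 1 n) = y.
Proof.
move=> yn; rewrite -(subnKC yn) iotaD count_cat.
rewrite (eq_in_count (a2 := predT)); last by move=> x; rewrite mem_iota => /andP [_ h] /=; lia.
rewrite count_predT size_iota (eq_in_count (a2 := pred0)); last by move=> x; rewrite mem_iota => /andP [h _] /=; lia.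
by rewrite count_pred0 addn0.
Qed.

Lemma perm_val u a : is_perm u -> a < size u ->
  nth 0 u a = count (fun b => nth 0 u b <= nth 0 u a) (iota 0 (size u)).
Proof.
move=> pu au.
have hin : nth 0 u a \in iota 1 (size u) by rewrite -(perm_mem pu) mem_nth.
move: hin; rewrite mem_iota => /andP [h1 h2].
rewrite (_ : count _ _ = count (fun x => x <= nth 0 u a) (mkseq (nth 0 u) (size u))); last by rewrite /mkseq count_map.
rewrite mkseq_nth.
have /permP pc := pu.
rewrite pc count_le_iota //.
Qed.

Lemma iso_eq u v : is_perm u -> is_perm v -> order_iso u v -> u = v.
Proof.
move=> pu pv [su h]; apply: (@eq_from_nth _ 0) => // a au.
rewrite (perm_val pu au) (perm_val pv (_ : a < size v)); last by rewrite -su.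
rewrite -su; apply: eq_in_count => b; rewrite mem_iota => /andP [_ bu].
by rewrite [LHS]leqNgt [RHS]leqNgt h.
Qed.

Lemma nl_subseq u s acc : subseq u s -> nl acc u <= nl acc s.
Proof.
elim: s u acc => [|x s IH] u acc; first by rewrite subseq0 => /eqP ->.
case: u => [|y u] /=.
  move=> _; case: ifP => _ //.
case: eqP => [-> | _] h.
  by case: ifP => _; [apply: IH | rewrite ltnS; apply: IH].
apply: leq_trans (IH _ _ h) _; apply: leq_trans (nl_cons_ge acc x s).
by apply: nl_mono; lia.
Qed.


Definition del d (s : seq nat) := take d s ++ drop d.+1 s.

Lemma size_del d s : d < size s -> size (del d s) = (size s).-1.
Proof. move=> ds; rewrite /del size_cat size_take size_drop ds; lia. Qed.

Lemma nth_del d s l : d < size s ->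
  nth 0 (del d s) l = if l < d then nth 0 s l else nth 0 s l.+1.
Proof.
move=> ds; rewrite /del nth_cat size_take ds.
case: ifP => ld; [by rewrite nth_take | rewrite nth_drop; congr nth; lia].
Qed.

Lemma del_subseq d s : subseq (del d s) s.
Proof.
rewrite /del -[X in subseq _ X](cat_take_drop d s); apply: cat_subseq => //.
by rewrite -add1n -drop_drop; apply: drop_subseq.
Qed.

Lemma subseq_del u s : subseq u s -> size u < size s ->
  exists d, d < size s /\ subseq u (del d s).
Proof.
elim: s u => [|x s IH] u //=.
case: u => [|y u] /=.
  by move=> _ _; exists 0; split => //; apply: sub0seq.
case: eqP => [-> | _] h hs.
  have [d [ds hd]] := IH _ h hs.
  exists d.+1; split => //.
  by rewrite /del /= eqxx.
by exists 0; split => //; rewrite /del /= drop0.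
Qed.

Lemma del_mask d s : d < size s ->
  mask (nseq d true ++ false :: nseq (size s - d.+1) true) s = del d s.
Proof.
move=> ds; rewrite -[X in mask _ X](cat_take_drop d s) mask_cat; last by rewrite size_nseq size_take ds.
rewrite mask_true; last by rewrite size_take ds.
rewrite (drop_nth 0) //= mask_true // size_drop; lia.
Qed.

Lemma iotaSmap d m : iota d.+1 m = map succn (iota d m).
Proof. by elim: m d => [|m IH] d //=; rewrite IH. Qed.

Lemma count_sub (P Q : pred nat) r : (forall x, x \in r -> P x -> Q x) ->
  count Q r = count P r + count (fun x => Q x && ~~ P x) r.
Proof.
elim: r => [|y r IH] h //=.
rewrite IH; last by move=> x xr; apply: h; rewrite in_cons xr orbT.
have := h y (mem_head _ _).
case: (P y); case: (Q y) => /= hh; (try by have := hh isT); lia.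
Qed.

Definition L' s d t := all (fun l => (l == d) || (nth 0 s l < nth 0 s t)) (iota 0 t).
Definition K s d := count (fun t => ~~ ltrmax s t && L' s d t) (iota d.+1 (size s - d.+1)).

Lemma LX1 s d : d < size s -> N s = N (del d s) + ~~ ltrmax s d + K s d.
Proof.
move=> ds.
set m := size s - d.+1.
have e1 : iota 0 (size s) = iota 0 d ++ d :: iota d.+1 m.
  rewrite -[in LHS](subnKC (ltnW ds)) iotaD add0n (_ : size s - d = m.+1) // /m; lia.
have e2 : iota 0 (size (del d s)) = iota 0 d ++ iota d m.
  rewrite size_del // -iotaD; congr iota; rewrite /m; lia.
rewrite /N e1 e2 !count_cat. rewrite [count _ (d :: _)]/= [nonltr s d]/nonltr ds.
have hA : count (nonltr (del d s)) (iota 0 d) = count (nonltr s) (iota 0 d).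
  apply: eq_in_count => l; rewrite mem_iota /= => ld.
  rewrite /nonltr size_del // (_ : l < (size s).-1); last by lia.
  rewrite (_ : l < size s); last by lia.
  congr (~~ _); apply: eq_in_all => k; rewrite mem_iota /= => kl.
  have kd : k < d by lia.
  by rewrite !(nth_del _ ds) kd ld.
have hB : count (nonltr (del d s)) (iota d m) = count (fun t => ~~ L' s d t) (iota d.+1 m).
  rewrite iotaSmap count_map.
  apply: eq_in_count => l; rewrite mem_iota /= => hl.
  have hl1 : l < (size s).-1 by rewrite /m in hl; lia.
  have hl2 : (l < d) = false by lia.
  rewrite /nonltr size_del // hl1 /=.
  congr (~~ _).
  apply/ltrP/allIotaP => h k hk.
  - case: (ltngtP k d) => kd.
    + have := h k; rewrite !(nth_del _ ds) kd hl2 => ->; last by lia.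
      by rewrite orbT.
    + have kd' : (k.-1 < d) = false by lia.
      have := h k.-1; rewrite !(nth_del _ ds) kd' hl2 (_ : k.-1.+1 = k); last by lia.
      by move=> ->; [rewrite orbT | lia].
    + by rewrite ?kd ?eqxx.
  - rewrite !(nth_del _ ds) hl2.
    case: ifP => kd.
    + have kd' : (k == d) = false by lia.
      by have := h k; rewrite kd' /=; apply; lia.
    + have kd' : (k.+1 == d) = false by lia.
      by have := h k.+1; rewrite kd' /=; apply; lia.
have hC : count (nonltr s) (iota d.+1 m) = count (fun t => ~~ ltrmax s t) (iota d.+1 m).
  apply: eq_in_count => l; rewrite mem_iota /= => hl.
  by rewrite /nonltr (_ : l < size s) //; lia.
have hK : count (fun t => ~~ ltrmax s t) (iota d.+1 m) =
    count (fun t => ~~ L' s d t) (iota d.+1 m) + K s d.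
  rewrite (count_sub (P := fun t => ~~ L' s d t)).
    congr (_ + _); rewrite /K -/m; apply: eq_count => t /=; by rewrite negbK.
  move=> t; rewrite mem_iota => ht; apply: contra => /ltrP h.
  apply/allIotaP => k kt; by rewrite h ?orbT.
rewrite hA hB hC hK; lia.
Qed.

Lemma LX2 s d : ~~ ltrmax s d -> K s d = 0.
Proof.
move=> nd; apply/eqP; rewrite eqn0Ngt -has_count; apply/hasPn => t.
rewrite mem_iota => /andP [dt _]; apply/negP => /andP [nt /allIotaP L].
move: nd => /ltrP nd; apply: nd => k kd.
apply/negP => /negP; rewrite -leqNgt => hk.
move: nt => /ltrP; apply => l lt.
have := L l lt; case: eqP => [-> _ | _ /= //].
have := L k; rewrite (_ : (k == d) = false) /=; last by lia.
move/(_ (ltn_trans kd dt)); lia.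
Qed.

Definition E s d := exists t, [/\ d < t, t < size s, ~~ ltrmax s t &
  forall l, l < t -> l != d -> nth 0 s l < nth 0 s t].

Lemma LX3 s d : 0 < K s d <-> E s d.
Proof.
rewrite /K -has_count; split.
- move/hasP => [t]; rewrite mem_iota => /andP [h1 h2] /andP [nt /allIotaP L].
  exists t; split => //; try lia.
  move=> l lt ld; have := L l lt; by rewrite (negbTE ld).
- move=> [t [h1 h2 nt L]]; apply/hasP; exists t; first by rewrite mem_iota; lia.
  rewrite nt /=; apply/allIotaP => l lt.
  by case: eqP => //= /eqP ld; apply: L.
Qed.


Definition std (v x : nat) := if v < x then x.-1 else x.

Lemma std_lt v x y : x != v -> y != v -> (x < y) = (std v x < std v y).
Proof. rewrite /std => hx hy; case: ifP; case: ifP; lia. Qed.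

Lemma perm_uniq_s s : is_perm s -> uniq s.
Proof. by move=> ps; rewrite (perm_uniq ps) iota_uniq. Qed.

Lemma perm_rng s x : is_perm s -> x \in s -> 0 < x <= size s.
Proof. move=> ps; rewrite (perm_mem ps) mem_iota; lia. Qed.

Lemma notin_del s d : uniq s -> d < size s -> nth 0 s d \notin del d s.
Proof.
move=> us ds; move: us; rewrite -[X in uniq X](cat_take_drop d s) (drop_nth 0) //.
rewrite cat_uniq => /and3P [_ hh u2].
rewrite /del mem_cat negb_or; apply/andP; split.
- apply/negP => hv; move/hasPn: hh => /(_ (nth 0 s d) (mem_head _ _)) /=.
  by rewrite hv.
- by move: u2 => /= /andP [].
Qed.

Lemma std_pattern s d : is_perm s -> d < size s ->
  let pi := map (std (nth 0 s d)) (del d s) in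
  is_perm pi /\ order_iso (del d s) pi.
Proof.
move=> ps ds pi.
set v := nth 0 s d.
have us := perm_uniq_s ps.
have vn := notin_del us ds.
have inS : forall x, x \in del d s -> x \in s by apply: mem_subseq (del_subseq d s).
have neq : forall x, x \in del d s -> x != v.
  by move=> x xd; apply/eqP => e; move: vn; rewrite -/v -e xd.
have vr : 0 < v <= size s by apply: perm_rng => //; rewrite mem_nth.
split; last first.
  split; first by rewrite size_map.
  move=> a b ha hb; rewrite !(nth_map 0) //.
  by apply: std_lt; apply: neq; rewrite mem_nth.
have ud : uniq (del d s) by apply: subseq_uniq (del_subseq d s) us.
have upi : uniq pi.
  rewrite map_inj_in_uniq // => x y hx hy.
  have := neq _ hx; have := neq _ hy; rewrite /std; case: ifP; case: ifP; lia.
have sp : size pi = (size s).-1 by rewrite size_map size_del.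
rewrite /is_perm; apply: uniq_perm => //; first by apply: iota_uniq.
have sub : {subset pi <= iota 1 (size pi)}.
  move=> z /mapP [x hx ->]; rewrite sp mem_iota.
  have := neq _ hx; have := perm_rng ps (inS _ hx); rewrite /std.
  case: ifP; lia.
have hsz : size (iota 1 (size pi)) <= size pi by rewrite size_iota.
have [_ h] := uniq_min_size upi sub hsz.
exact: h.
Qed.


Lemma minex (P : pred nat) : (exists n, P n) -> exists m, P m /\ forall n, P n -> m <= n.
Proof. by move=> h; case: (ex_minnP h) => m Pm mm; exists m. Qed.

Lemma maxex (P : pred nat) b : (exists n, P n) -> (forall n, P n -> n <= b) ->
  exists m, P m /\ forall n, P n -> n <= m.
Proof. by move=> h hb; case: (ex_maxnP h hb) => m Pm mm; exists m. Qed.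

Lemma pv_rng s (ps : is_perm s) i : i < size s -> 0 < nth 0 s i <= size s.
Proof. by move=> h; apply: perm_rng => //; rewrite mem_nth. Qed.

Lemma pv_inj s (ps : is_perm s) i j : i < size s -> j < size s -> nth 0 s i = nth 0 s j -> i = j.
Proof. by move=> hi hj e; apply/eqP; rewrite -(nth_uniq 0 hi hj (perm_uniq_s ps)) e. Qed.

Lemma pv_ex s (ps : is_perm s) x : 0 < x <= size s -> exists i, i < size s /\ nth 0 s i = x.
Proof.
move=> hx; have xs : x \in s by rewrite (perm_mem ps) mem_iota; lia.
by exists (index x s); rewrite index_mem nth_index.
Qed.


Lemma nltrP s t : ~~ ltrmax s t -> exists k, k < t /\ nth 0 s t <= nth 0 s k.
Proof.
rewrite /ltrmax -has_predC => /hasP [k]; rewrite mem_iota => kt h.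
by exists k; split; [lia | rewrite leqNgt].
Qed.

Lemma Lmax s i l : ltrmax s i -> i <= l -> (forall m, i < m -> m <= l -> ~~ ltrmax s m) ->
  forall x, x <= l -> nth 0 s x <= nth 0 s i.
Proof.
move=> /ltrP hi; elim: l => [|l IH] il hm x xl.
  have -> : x = 0 by lia.
  by have -> : i = 0 by lia.
case: (leqP i l) => il'; last first.
  have ei : i = l.+1 by lia.
  case: (leqP x l) => xl'; last by rewrite (_ : x = i) //; lia.
  by apply: ltnW; apply: hi; lia.
have IH' : forall x, x <= l -> nth 0 s x <= nth 0 s i.
  by apply: IH => // m h1 h2; apply: hm => //; lia.
case: (leqP x l) => xl'; first exact: IH'.
have ex : x = l.+1 by lia.
have := hm l.+1 il' (leqnn _).
move/nltrP => [k [kl hk]]; rewrite ex; apply: leq_trans hk (IH' _ _); lia.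
Qed.

Lemma F3 s : E s 0 -> nonltr s 1.
Proof.
move=> [t [h1 h2 nt L]]; rewrite /nonltr (_ : 1 < size s); last by lia.
apply/negP => /ltrP l1.
case: (ltngtP t 1) => t1; first lia; last by move: nt; rewrite t1 => /ltrP; apply.
move: nt => /ltrP; apply => k kt.
case: (posnP k) => [-> | k0]; last by apply: L => //; rewrite -lt0n.
apply: ltn_trans (l1 0 _) (L 1 t1 _) => //.
Qed.

Lemma ltr_max s dn : is_perm s -> dn < size s -> nth 0 s dn = size s -> ltrmax s dn.
Proof.
move=> ps dnn vdn; apply/ltrP => k kd.
have kn : k < size s by lia.
have := pv_rng ps kn.
have : nth 0 s k != size s by apply/eqP => e; have := pv_inj ps kn dnn (etrans e (esym vdn)); lia.
lia.
Qed.

Lemma F2 s : is_perm s -> 0 < size s -> (forall d, d < size s -> ltrmax s d -> E s d) ->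
  exists t, nth 0 s t = (size s).-1 /\ nonltr s t.
Proof.
move=> ps n0 hE.
have [dn [dnn vdn]] : exists i, i < size s /\ nth 0 s i = size s by apply: pv_ex => //; lia.
have ldn := ltr_max ps dnn vdn.
have [t [h1 h2 nt L]] := hE dn dnn ldn.
have [e [en ve]] : exists i, i < size s /\ nth 0 s i = (size s).-1 by apply: pv_ex => //; lia.
exists e; split => //.
have tn : nth 0 s t != size s by apply/eqP => et; have := pv_inj ps h2 dnn (etrans et (esym vdn)); lia.
have vt := pv_rng ps h2.
have edn : e != dn by apply/eqP => ee; move: ve; rewrite ee vdn; lia.
have te : t <= e.
  rewrite leqNgt; apply/negP => et.
  have := L e et edn; rewrite ve; lia.
rewrite /nonltr en /=; apply/negP => /ltrP h.
have dne : dn < e by lia.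
have := h dn dne; rewrite vdn ve; lia.
Qed.

Lemma F4 s i j k : i < j -> j < k -> k < size s -> ltrmax s k -> E s j ->
  exists t, [/\ j < t, t < k, nonltr s t & nth 0 s i < nth 0 s t].
Proof.
move=> ij jk kn /ltrP lk [t [h1 h2 nt L]].
have tk : t < k.
  rewrite ltnNge; apply/negP => kt.
  have [kt'|kt'|kt'] := ltngtP k t.
  - move: nt => /ltrP; apply => l lt.
    case: (eqVneq l j) => [-> | lj]; last by apply: L.
    have kj : k != j by lia.
    have := lk j jk; have := L k kt' kj.
    lia.
  - lia.
  - by move: nt; rewrite -kt' => /ltrP; apply => l lk'; apply: lk.
exists t; split => //.
- by rewrite /nonltr h2.
- by apply: L; lia.
Qed.

Lemma ltr0 s : ltrmax s 0.
Proof. by []. Qed.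

Lemma Bk s : is_perm s -> 0 < size s ->
  (exists t, nth 0 s t = (size s).-1 /\ nonltr s t) ->
  nonltr s 1 ->
  (forall i j k, i < j -> j < k -> k < size s ->
          ltrmax s i -> ltrmax s j -> ltrmax s k ->
          (forall l, i < l -> l < k -> l != j -> ~~ ltrmax s l) ->
          exists t, [/\ j < t, t < k, nonltr s t & nth 0 s i < nth 0 s t]) ->
  forall d, d < size s -> ltrmax s d -> E s d.
Proof.
move=> ps n0 [e [ve ne]] n1 hiv d dn ld.
case: (posnP d) => [-> | d0].
  move: n1; rewrite /nonltr => /andP [h1 h2].
  exists 1; split => // l l1; lia.
have [hk|hk] := boolP (has (fun m => ltrmax s m) (iota d.+1 (size s - d.+1))).
- have [k [/andP [/andP [dk kn] lk] kmin]] :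
      exists m, ((d < m) && (m < size s) && ltrmax s m) /\
        forall x, (d < x) && (x < size s) && ltrmax s x -> m <= x.
    apply: minex; move/hasP: hk => [m]; rewrite mem_iota => hm lm.
    exists m; rewrite lm andbT; apply/andP; split; lia.
  have [i [/andP [id li] imax]] :
      exists m, ((m < d) && ltrmax s m) /\ forall x, (x < d) && ltrmax s x -> x <= m.
    apply: (@maxex _ d); first by exists 0; rewrite d0.
    by move=> x /andP [h _]; lia.
  have cons : forall l, i < l -> l < k -> l != d -> ~~ ltrmax s l.
    move=> l il lkk ldd; apply/negP => ll.
    case: (ltngtP l d) => h.
    + by have := imax l; rewrite h ll /= => /(_ isT); lia.
    + by have := kmin l; rewrite h ll (_ : l < size s) /=; [move/(_ isT); lia | lia].
    + by move: ldd; rewrite h eqxx.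
  have [t0 [dt0 t0k _ it0]] := hiv i d k id dk kn li ld lk cons.
  have [t [/andP [dt it] tmin]] :
      exists m, ((d < m) && (nth 0 s i < nth 0 s m)) /\
        forall x, (d < x) && (nth 0 s i < nth 0 s x) -> m <= x.
    by apply: minex; exists t0; rewrite dt0 it0.
  have tt0 : t <= t0 by apply: tmin; rewrite dt0 it0.
  exists t; split => //; first by lia.
  + apply/negP => lt; have := kmin t; rewrite dt lt (_ : t < size s) /=; last by lia.
    move/(_ isT); lia.
  + move=> l lt ldd.
    case: (ltngtP l d) => h.
    * have hL : forall m, i < m -> m <= d.-1 -> ~~ ltrmax s m.
        move=> m h1 h2; apply/negP => lm; have := imax m; rewrite lm (_ : m < d) /=; last by lia.
        move/(_ isT); lia.
      have hid : i <= d.-1 by lia.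
      have hld : l <= d.-1 by lia.
      have := Lmax li hid hL hld; lia.
    * have := tmin l; rewrite h /=.
      case: (ltnP (nth 0 s i) (nth 0 s l)) => hh /=; first by move/(_ isT); lia.
      lia.
    * by move: ldd; rewrite h eqxx.
- have hno : forall m, d < m -> m <= (size s).-1 -> ~~ ltrmax s m.
    move=> m h1 h2; apply/negP => lm; move/hasP: hk; apply; exists m => //.
    rewrite mem_iota; lia.
  have hdn : d <= (size s).-1 by lia.
  have hmax := Lmax ld hdn hno.
  have [dm [dmn vdm]] : exists i, i < size s /\ nth 0 s i = size s by apply: pv_ex => //; lia.
  have vd : nth 0 s d = size s.
    have hdm : dm <= (size s).-1 by lia.
    have := hmax dm hdm.
    have := pv_rng ps dn; lia.
  move: ne; rewrite /nonltr => /andP [en nle].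
  have ved : e != d by apply/eqP => ee; move: ve; rewrite ee vd; lia.
  have de : d < e.
    rewrite ltnNge; apply/negP => ed.
    have ed' : e < d by lia.
    have [k [ke hk']] := nltrP nle.
    have kn : k < size s by lia.
    have := pv_rng ps kn.
    have : nth 0 s k != size s.
      by apply/eqP => ek; have := pv_inj ps kn dn (etrans ek (esym vd)); lia.
    have : nth 0 s k != nth 0 s e.
      by apply/eqP => ek; have := pv_inj ps kn en ek; lia.
    rewrite ve in hk' *; lia.
  exists e; split => // l le ldd.
  have ln : l < size s by lia.
  have := pv_rng ps ln.
  have : nth 0 s l != size s.
    by apply/eqP => ek; have := pv_inj ps ln dn (etrans ek (esym vd)); move/eqP: ldd; lia.
  have : nth 0 s l != nth 0 s e.
    by apply/eqP => ek; have := pv_inj ps ln en ek; lia.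
  rewrite ve; lia.
Qed.


Lemma all_sub (P : pred nat) u s : subseq u s -> all P s -> all P u.
Proof. move=> h /allP a; apply/allP => x xu; apply: a; exact: mem_subseq h _ xu. Qed.

Lemma notC p t : is_perm t -> inC p t -> N t <= p.
Proof.
move=> pt [k [kp J]]; rewrite bridge ?perm_pos //; apply: leq_trans (C1 J) kp.
Qed.

Lemma yesC p t : is_perm t -> N t <= p -> inC p t.
Proof. by move=> pt h; apply: C2 => //; rewrite -bridge ?perm_pos. Qed.

Unset Implicit Arguments.
Theorem mainTheorem4 (p n : nat) (s : seq nat) :
  1 <= n -> size s = n -> is_perm s ->
  (inB p s <->
   [/\ (* (i) exactly p+1 non-left-to-right maxima *)
       count (nonltr s) (iota 0 n) = p.+1,
       (* (ii) the value n-1 is a non-left-to-right maximum *)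
       (exists t, nth 0 s t = n.-1 /\ nonltr s t),
       (* (iii) sigma_2 (position 1, 0-indexed) is a non-ltr maximum *)
       nonltr s 1 &
       (* (iv) *)
       (forall i j k, i < j -> j < k -> k < n ->
          ltrmax s i -> ltrmax s j -> ltrmax s k ->
          (forall l, i < l -> l < k -> l != j -> ~~ ltrmax s l) ->
          exists t, [/\ j < t, t < k, nonltr s t & nth 0 s i < nth 0 s t])]).
Proof.
move=> n1 sn ps; subst n.
rewrite -/(N s).
split.
- move=> [_ [nC hB]].
  have hNs : p < N s by rewrite ltnNge; apply/negP => h; apply: nC; apply: yesC.
  have hdel : forall d, d < size s -> N (del d s) <= p.
    move=> d ds.
    have [ppi iso] := std_pattern ps ds.
    set pi := map _ _ in ppi iso.
    have pat : pattern pi s.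
      by split => //; exists (nseq d true ++ false :: nseq (size s - d.+1) true); rewrite del_mask.
    have npi : pi <> s.
      move=> e; have := congr1 size e; rewrite size_map size_del //; lia.
    rewrite (N_iso iso); exact: notC (hB _ pat npi).
  have /hasP [d0 d0in nd0] : has (nonltr s) (iota 0 (size s)) by rewrite has_count -/(N s); lia.
  move: nd0; rewrite /nonltr => /andP [d0n nl0].
  have hi : N s = p.+1.
    have := LX1 d0n; rewrite nl0 (LX2 nl0) /=; have := hdel d0 d0n; lia.
  have hE : forall d, d < size s -> ltrmax s d -> E s d.
    move=> d dn ld; apply/LX3; have := LX1 dn; rewrite ld /=; have := hdel d dn; lia.
  split => //.
  + exact: F2.
  + by apply: F3; apply: hE => //; lia.
  + move=> i j k ij jk kn li lj lk _; apply: F4 => //; apply: hE => //; lia.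
- move=> [hi hii hiii hiv].
  have hE := Bk ps n1 hii hiii hiv.
  split => //; split.
    by move/(notC ps); lia.
  move=> pi [ppi [m iso]] npi.
  have spos := perm_pos ps.
  have msub : subseq (mask m s) s by apply: mask_subseq.
  have ms : size (mask m s) < size s.
    rewrite ltn_neqAle size_subseq // andbT; apply/negP => /eqP e.
    have := size_subseq_leqif msub; rewrite e => [[_]]; rewrite eqxx => /esym/eqP em.
    by apply: npi; apply/esym/iso_eq => //; rewrite -em.
  have [d [ds hd]] := subseq_del msub ms.
  apply: yesC => //; rewrite -(N_iso iso).
  have dpos : all (fun x => 0 < x) (del d s) by apply: all_sub (del_subseq d s) spos.
  rewrite bridge; last by apply: all_sub hd dpos.
  apply: leq_trans (nl_subseq 0 hd) _; rewrite -bridge //.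
  have := LX1 ds; case: (boolP (ltrmax s d)) => ld /=.
  + have := hE d ds ld => /LX3; lia.
  + rewrite (LX2 ld); lia.
Qed.
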